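(* Let $K$ be a field, $X$ a finite connected poset, $\varphi$ an elementary Lie automorphism of $I(X,K)$ and $\theta=\theta_\varphi$. For any maximal chain $u_1<u_2<\dots<u_m$ in $X$ there exists a maximal chain $v_1<v_2<\dots<v_m$ in $X$ such that either (1) $\theta(e_{u_iu_j})=e_{v_iv_j}$ for all $1\le i<j\le m$, or (2) $\theta(e_{u_iu_j})=e_{v_{m-j+1}v_{m-i+1}}$ for all $1\le i<j\le m$.
   Context: $I(X,K)$ is the incidence algebra: functions $f:X\times X\to K$ with $f(x,y)=0$ unless $x\le y$, product $(fg)(x,y)=\sum_{x\le t\le y}f(x,t)g(t,y)$; $e_{xy}$ ($x\le y$) is the basis element equal to $1$ at $(x,y)$ and $0$ elsewhere. $B=\{e_{xy}:x<y\}$. A Lie automorphism is a bijective linear map preserving $[f,g]=fg-gf$. With $l(\lfloor x,y\rfloor)$ the maximal length of a chain in $\{z:x\le z\le y\}$ and $L_i=\mathrm{span}_K\{e_{xy}:l(\lfloor x,y\rfloor)=i\}$, for a Lie automorphism $\psi$ let $\widetilde\psi$ send $e_{xy}\in L_i$ to the $L_i$-component of $\psi(e_{xy})$. A Lie automorphism $\varphi$ is elementary if $\varphi=\widetilde\psi$ for some Lie automorphism $\psi$. For elementary $\varphi$, for each $x<y$ there are a unique $e_{uv}\in B$ and $k\in K^*$ with $\varphi(e_{xy})=k e_{uv}$; set $\theta_\varphi(e_{xy})=e_{uv}$. Connected means any two elements are joined by a sequence in which consecutive elements are in a covering relation. *)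

(* Defs.v *)
From HB Require Import structures.
From mathcomp Require Import all_boot all_order all_algebra.
Set Implicit Arguments. Unset Strict Implicit. Unset Printing Implicit Defensive.
Import Order.Theory GRing.Theory.
Local Open Scope order_scope.

(* X is a finite poset [T : finPOrderType d]; elements of the
   incidence algebra I(X,K) are functions f : T -> T -> K vanishing off {x <= y}. *)

Section Incidence.
Variables (d : Order.disp_t) (T : finPOrderType d) (K : fieldType).

Definition inI (f : T -> T -> K) : Prop := forall x y, ~~ (x <= y) -> f x y = 0%R.

Definition mulI (f g : T -> T -> K) : T -> T -> K :=
  fun x y => (\sum_(t : T | ((x <= t) && (t <= y))%O) f x t * g t y)%R.

Definition lieI (f g : T -> T -> K) : T -> T -> K :=
  fun x y => (mulI f g x y - mulI g f x y)%R.

Definition eI (x y : T) : T -> T -> K :=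
  fun u v => if (u == x) && (v == y) then 1%R else 0%R.

(* a Lie automorphism of I(X,K): a map I -> I (values outside I are irrelevant)
   that is linear, bijective and preserves the bracket *)
Definition is_lie_aut (psi : (T -> T -> K) -> (T -> T -> K)) : Prop :=
  [/\ (forall f, inI f -> inI (psi f)),
      (forall (a : K) f g, inI f -> inI g ->
          psi (fun x y => a * f x y + g x y)%R = (fun x y => a * psi f x y + psi g x y)%R),
      (forall f g, inI f -> inI g -> psi f = psi g -> f = g),
      (forall g, inI g -> exists f, inI f /\ psi f = g) &
      (forall f g, inI f -> inI g -> psi (lieI f g) = lieI (psi f) (psi g))].

Definition chain_in (x y : T) (S : {set T}) : bool :=
  [forall u, [forall v, (u \in S) ==> (v \in S) ==> (u >=< v)]] &&
  [forall u, (u \in S) ==> (x <= u) && (u <= y)].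

Definition lng (x y : T) : nat := ((\max_(S : {set T} | chain_in x y S) #|S|)%N).-1.

Definition compL (i : nat) (f : T -> T -> K) : T -> T -> K :=
  fun u v => if (u <= v) && (lng u v == i) then f u v else 0%R.

(* phi is elementary: phi = psi~ for some Lie automorphism psi, where psi~ is the
   linear map sending e_xy (in L_{l(x,y)}) to the L_{l(x,y)}-component of psi(e_xy) *)
Definition elementary (phi : (T -> T -> K) -> (T -> T -> K)) : Prop :=
  is_lie_aut phi /\
  exists psi, is_lie_aut psi /\
    forall x y, x <= y -> phi (eI x y) = compL (lng x y) (psi (eI x y)).

(* theta_phi(e_xy) = e_uv  iff  phi(e_xy) = k e_uv with k <> 0 and u < v;
   returns the pair (u,v) if such exists (it is unique), None otherwise *)
Definition theta (phi : (T -> T -> K) -> (T -> T -> K)) (x y : T) : option (T * T) :=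
  [pick p : T * T | [&& p.1 < p.2, phi (eI x y) p.1 p.2 != 0%R &
     [forall q : T * T, (q != p) ==> (phi (eI x y) q.1 q.2 == 0%R)]]].

Definition covers (x y : T) : bool := (x < y) && [forall z, ~~ ((x < z) && (z < y))].

Definition connectedP : Prop :=
  forall x y : T, exists s : seq T,
    path (fun a b => covers a b || covers b a) x s /\ last x s = y.

Definition max_chain (s : seq T) : Prop :=
  sorted (fun a b => a < b) s /\
  forall z, z \notin s -> exists2 w, w \in s & ~~ (z >=< w).

End Incidence.

(* Main.v *)
Require Import Defs.
From HB Require Import structures.
From mathcomp Require Import all_boot all_order all_algebra.
From mathcomp Require Import zify.
From Stdlib Require Import FunctionalExtensionality.
Import Order.Theory GRing.Theory.
Local Open Scope order_scope.

Module Helpers.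
Set Implicit Arguments. Unset Strict Implicit.

Section Comb.
Context {dd : Order.disp_t} {A : porderType dd}.

Definition flt (n : nat) (f : nat -> nat -> A * A) :=
  forall i j, (i < j)%N -> (j < n)%N -> (f i j).1 < (f i j).2.
Definition ftri (n : nat) (f : nat -> nat -> A * A) :=
  forall i j k, (i < j)%N -> (j < k)%N -> (k < n)%N ->
   ((f i j).2 = (f j k).1 /\ f i k = ((f i j).1, (f j k).2)) \/
   ((f j k).2 = (f i j).1 /\ f i k = ((f j k).1, (f i j).2)).

Lemma forward n f (x0 : A) : flt n f -> ftri n f ->
  (forall i, (i.+2 < n)%N -> (f i i.+1).2 = (f i.+1 i.+2).1) ->
  exists w : seq A, [/\ size w = n, sorted <%O w &
     forall i j, (i < j)%N -> (j < n)%N -> f i j = (nth x0 w i, nth x0 w j)].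
Proof.
move=> Hlt Htri HF.
pose W i := if i is k.+1 then (f k k.+1).2 else (f 0 1).1.
have W1 : forall i, (i.+1 < n)%N -> W i = (f i i.+1).1.
  by case=> [|k] //= Hk; rewrite HF.
have key : forall j i, (i < j)%N -> (j < n)%N -> f i j = (W i, W j).
  elim=> [|j IH] i // Hij Hj.
  have [lij|gij|eij] := ltngtP i j; last first.
    by subst i; rewrite W1 // [in RHS]/W -surjective_pairing.
    by rewrite ltnS leqNgt gij in Hij.
  have Hjj := Hlt _ _ (ltnSn j) Hj.
  have E1 := IH i lij (ltnW Hj).
  case: (Htri i j j.+1 lij (ltnSn j) Hj) => [[_ ->]|[Heq _]].
    by rewrite E1.
  exfalso; have Hij2 := Hlt _ _ lij (ltnW Hj).
  rewrite E1 /= in Hij2 Heq.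
  rewrite (W1 j Hj) in Hij2.
  by have := lt_trans Hij2 Hjj; rewrite Heq ltxx.
exists (mkseq W n); split.
- by rewrite size_mkseq.
- apply/(sortedP x0) => i; rewrite size_mkseq => Hi.
  rewrite !nth_mkseq // ?(ltnW Hi) //=.
  by rewrite W1 //; apply: Hlt.
- move=> i j Hij Hj; rewrite !nth_mkseq //; last exact: ltn_trans Hij Hj.
  exact: key.
Qed.


Lemma FB_excl (x y : A * A) : x.1 < x.2 -> y.1 < y.2 -> x.2 = y.1 -> y.2 = x.1 -> False.
Proof.
move=> h1 h2 e1 e2; rewrite -e1 in h2; have := lt_trans h1 h2; by rewrite e2 ltxx.
Qed.

Lemma comb n f (x0 : A) : flt n f -> ftri n f ->
  exists w : seq A, [/\ size w = n, sorted <%O w &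
     (forall i j, (i < j)%N -> (j < n)%N -> f i j = (nth x0 w i, nth x0 w j)) \/
     (forall i j, (i < j)%N -> (j < n)%N ->
         f i j = (nth x0 w (n - 1 - j), nth x0 w (n - 1 - i)))].
Proof.
move=> Hlt Htri.
pose Fb i := (f i i.+1).2 == (f i.+1 i.+2).1.
have prop : forall i, (i.+3 < n)%N -> Fb i = Fb i.+1.
  move=> i Hi.
  have la := Hlt i i.+1 (ltnSn _) ltac:(lia).
  have lb := Hlt i.+1 i.+2 (ltnSn _) ltac:(lia).
  have lc := Hlt i.+2 i.+3 (ltnSn _) ltac:(lia).
  have le := Hlt i.+1 i.+3 ltac:(lia) ltac:(lia).
  have T3 := Htri i i.+1 i.+3 (ltnSn _) ltac:(lia) Hi.
  rewrite /Fb.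
  case: (Htri i i.+1 i.+2 (ltnSn _) (ltnSn _) ltac:(lia)) => [[e1 _]|[e1 _]];
  case: (Htri i.+1 i.+2 i.+3 (ltnSn _) (ltnSn _) Hi) => [[e2 e3]|[e2 e3]].
  - by rewrite e1 e2 !eqxx.
  - exfalso; case: T3 => [[e4 _]|[e4 _]].
      rewrite e3 /= in e4; move: lc; by rewrite e2 -e1 e4 ltxx.
    rewrite e3 /= in e4; exact: (FB_excl la lb e1 e4).
  - exfalso; case: T3 => [[e4 _]|[e4 _]].
      rewrite e3 /= in e4; exact: (FB_excl la lb e4 e1).
    rewrite e3 /= in e4; move: lc; by rewrite e4 -e1 e2 ltxx.
  - have n1 : (f i i.+1).2 != (f i.+1 i.+2).1.
      by apply/eqP => h; exact: (FB_excl la lb h e1).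
    have n2 : (f i.+1 i.+2).2 != (f i.+2 i.+3).1.
      by apply/eqP => h; exact: (FB_excl lb lc h e2).
    by rewrite (negbTE n1) (negbTE n2).
have all0 : forall i, (i.+2 < n)%N -> Fb i = Fb 0.
  elim=> [//|i IH] Hi; rewrite -prop //; apply: IH; lia.
have [small|big] := leqP n 2.
  have [w [h1 h2 h3]] := forward x0 Hlt Htri (fun i Hi => ltac:(lia)).
  by exists w; split => //; left.
case F0: (Fb 0).
  have [w [h1 h2 h3]] := forward x0 Hlt Htri (fun i Hi => ltac:(apply/eqP; rewrite -/(Fb i) all0 //)).
  by exists w; split => //; left.
have HB : forall i, (i.+2 < n)%N -> (f i.+1 i.+2).2 = (f i i.+1).1.
  move=> i Hi; case: (Htri i i.+1 i.+2 (ltnSn _) (ltnSn _) Hi) => [[e _]|[e _]] //.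
  by move: (all0 i Hi); rewrite F0 /Fb e eqxx.
pose g i j := f (n.-1 - j) (n.-1 - i).
have glt : flt n g.
  move=> i j Hij Hj; rewrite /g; apply: Hlt; lia.
have gtri : ftri n g.
  move=> i j k Hij Hjk Hk; rewrite /g.
  case: (Htri (n.-1 - k) (n.-1 - j) (n.-1 - i) ltac:(lia) ltac:(lia) ltac:(lia)) => [[e1 e2]|[e1 e2]].
    by right; split.
  by left; split.
have gF : forall i, (i.+2 < n)%N -> (g i i.+1).2 = (g i.+1 i.+2).1.
  move=> i Hi; rewrite /g.
  have -> : (n.-1 - i = (n.-1 - i.+2).+2)%N by lia.
  have -> : (n.-1 - i.+1 = (n.-1 - i.+2).+1)%N by lia.
  apply: HB; lia.
have [w [h1 h2 h3]] := forward x0 glt gtri gF.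
exists w; split => //; right => i j Hij Hj.
have -> : f i j = g (n.-1 - j) (n.-1 - i).
  by rewrite /g; congr f; lia.
rewrite h3; try lia; congr pair; congr nth; lia.
Qed.

End Comb.


Section Lng.
Variables (d : Order.disp_t) (T : finPOrderType d).

Lemma lng_refl (a : T) : lng a a = 0%N.
Proof.
rewrite /lng; suff : (\max_(S : {set T} | chain_in a a S) #|S| <= 1)%N.
  by case: (\max_(S | _) _) => [|[]].
apply/bigmax_leqP => S /andP[_ /forallP HS].
rewrite -(cards1 a); apply: subset_leq_card; apply/subsetP => x xS.
move: (HS x); rewrite xS /= => /andP[h1 h2]; rewrite inE; apply/eqP/le_anti.
by rewrite h1 h2.
Qed.

Lemma lng_lt (a b : T) : a < b -> (0 < lng a b)%N.
Proof.
move=> ab; rewrite /lng.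
have ch : chain_in a b [set a; b].
  apply/andP; split; apply/forallP => x; last first.
    rewrite !inE; apply/implyP => /orP[]/eqP->; by rewrite ?lexx ?(ltW ab).
  apply/forallP => y; apply/implyP; rewrite !inE => /orP[]/eqP->; apply/implyP => /orP[]/eqP->;
  by rewrite /Order.comparable ?lexx ?(ltW ab) ?orbT.
have := @leq_bigmax_cond _ (fun S => chain_in a b S) (fun S : {set T} => #|S|) _ ch.
rewrite cards2 (lt_eqF ab) /=.
by case: (\max_(S | _) _) => [|[|n]].
Qed.
End Lng.

Section Alg.
Variables (d : Order.disp_t) (T : finPOrderType d) (K : fieldType).
Variable phi : (T -> T -> K) -> (T -> T -> K).
Hypothesis Hlie : is_lie_aut phi.
Hypothesis S1 : forall (x a b : T), a != b -> phi (eI K x x) a b = 0%R.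
Hypothesis S2 : forall (x y a : T), x < y -> phi (eI K x y) a a = 0%R.

Local Open Scope ring_scope.
Local Notation E := (eI K).
Local Notation Z := (fun _ _ : T => 0 : K).
Implicit Types (f g : T -> T -> K).

Lemma phiI f : inI f -> inI (phi f). Proof. by case: Hlie => H _ _ _ _; apply: H. Qed.
Lemma phiL (a : K) f g : inI f -> inI g ->
  phi (fun x y => a * f x y + g x y) = (fun x y => a * phi f x y + phi g x y).
Proof. by case: Hlie => _ H _ _ _; apply: H. Qed.
Lemma phi_inj f g : inI f -> inI g -> phi f = phi g -> f = g.
Proof. by case: Hlie => _ _ H _ _; apply: H. Qed.
Lemma phi_surj g : inI g -> exists f, inI f /\ phi f = g.
Proof. by case: Hlie => _ _ _ H _; apply: H. Qed.
Lemma phi_lie f g : inI f -> inI g -> phi (lieI f g) = lieI (phi f) (phi g).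
Proof. by case: Hlie => _ _ _ _ H; apply: H. Qed.

Lemma inI0 : inI Z. Proof. by []. Qed.
Lemma inIE (x y : T) : (x <= y)%O -> inI (E x y).
Proof.
move=> xy u v; rewrite /eI; case: andP => // [[/eqP-> /eqP->]]; by rewrite xy.
Qed.
Lemma inIL (a : K) f g : inI f -> inI g -> inI (fun x y => a * f x y + g x y).
Proof. by move=> hf hg x y h; rewrite hf // hg // mulr0 addr0. Qed.
Lemma inIZ (a : K) f : inI f -> inI (fun x y => a * f x y).
Proof. by move=> hf x y h; rewrite hf // mulr0. Qed.

Lemma phi0 : phi Z = Z.
Proof.
have := phiL 1 inI0 inI0.
have -> : (fun x y : T => 1 * (Z x y) + Z x y) = Z.
  by apply: functional_extensionality => x; apply: functional_extensionality => y; rewrite mulr0 addr0.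
move=> h; apply: functional_extensionality => x; apply: functional_extensionality => y.
have := congr1 (fun h => h x y) h => /= h2; rewrite mul1r in h2.
by apply: (@addrI _ (phi Z x y)); rewrite addr0 -h2.
Qed.

Lemma phiZ (a : K) f : inI f -> phi (fun x y => a * f x y) = (fun x y => a * phi f x y).
Proof.
move=> hf; have := phiL a hf inI0; rewrite phi0.
have -> : (fun x y : T => a * f x y + Z x y) = (fun x y => a * f x y).
  by apply: functional_extensionality => x; apply: functional_extensionality => y; rewrite addr0.
move=> ->; apply: functional_extensionality => x; apply: functional_extensionality => y; by rewrite addr0.
Qed.

Lemma phiD f g : inI f -> inI g -> phi (fun x y => f x y + g x y) = (fun x y => phi f x y + phi g x y).
Proof.
move=> hf hg; have := phiL 1 hf hg.
have -> : (fun x y : T => 1 * f x y + g x y) = (fun x y => f x y + g x y).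
  by apply: functional_extensionality => x; apply: functional_extensionality => y; rewrite mul1r.
move=> ->; apply: functional_extensionality => x; apply: functional_extensionality => y; by rewrite mul1r.
Qed.

Lemma inI_sum (r : seq (T * T)) (c : T * T -> K) :
  (forall p, p \in r -> (p.1 <= p.2)%O) ->
  inI (fun a b => \sum_(p <- r) c p * E p.1 p.2 a b).
Proof.
move=> hr a b ab; rewrite big1_seq // => p /andP[_ pr].
by rewrite (inIE (hr p pr)) // mulr0.
Qed.

Lemma phi_sum (r : seq (T * T)) (c : T * T -> K) :
  (forall p, p \in r -> (p.1 <= p.2)%O) ->
  phi (fun a b => \sum_(p <- r) c p * E p.1 p.2 a b) =
  (fun a b => \sum_(p <- r) c p * phi (E p.1 p.2) a b).
Proof.
elim: r => [|p r IH] hr.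
  have -> : (fun a b : T => \sum_(p <- [::]) c p * E p.1 p.2 a b) = Z.
    by apply: functional_extensionality => x; apply: functional_extensionality => y; rewrite big_nil.
  rewrite phi0; apply: functional_extensionality => x; apply: functional_extensionality => y; by rewrite big_nil.
have hr' : forall q, q \in r -> (q.1 <= q.2)%O by move=> q qr; apply: hr; rewrite inE qr orbT.
have -> : (fun a b : T => \sum_(q <- p :: r) c q * E q.1 q.2 a b) =
   (fun a b => c p * E p.1 p.2 a b + (fun a b => \sum_(q <- r) c q * E q.1 q.2 a b) a b).
  by apply: functional_extensionality => x; apply: functional_extensionality => y; rewrite big_cons.
rewrite phiL ?IH //; last exact: inI_sum.
  by apply: functional_extensionality => x; apply: functional_extensionality => y; rewrite big_cons.
by apply: inIE; apply: hr; rewrite inE eqxx.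
Qed.

Definition Rr : seq (T * T) := [seq p <- enum {: T * T} | (p.1 <= p.2)%O].

Lemma Rr_le p : p \in Rr -> (p.1 <= p.2)%O.
Proof. by rewrite mem_filter => /andP[]. Qed.

Lemma eI_neq0 (a b u v : T) : E a b u v != 0 -> u = a /\ v = b.
Proof. by rewrite /eI; case: andP => [[/eqP-> /eqP->]|]; rewrite ?eqxx. Qed.

Lemma decomp f : inI f -> f = (fun a b => \sum_(p <- Rr) f p.1 p.2 * E p.1 p.2 a b).
Proof.
move=> hf; apply: functional_extensionality => a; apply: functional_extensionality => b.
case: (boolP (a <= b)%O) => ab.
  rewrite (bigD1_seq (a, b)) /=; last first.
  - by rewrite filter_uniq // enum_uniq.
  - by rewrite mem_filter /= ab mem_enum.
  rewrite /eI !eqxx /= mulr1 big1 ?addr0 // => p pab.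
  case: andP => [[/eqP e1 /eqP e2]|]; last by rewrite mulr0.
  by move: pab; rewrite [p]surjective_pairing -e1 -e2 eqxx.
rewrite hf // big1_seq // => p /andP[_ pr].
have := Rr_le pr; case: (eqVneq (E p.1 p.2 a b) 0) => [->|/eI_neq0[e1 e2]]; first by rewrite mulr0.
by rewrite -e1 -e2 (negbTE ab).
Qed.

Lemma phi_expand f : inI f ->
  phi f = (fun a b => \sum_(p <- Rr) f p.1 p.2 * phi (E p.1 p.2) a b).
Proof. by move=> hf; rewrite {1}(decomp hf) phi_sum //; exact: Rr_le. Qed.

Definition Ddiag (f : T -> T -> K) := forall a b, a != b -> f a b = 0.

Lemma diag_pre s : exists f, [/\ inI f, Ddiag f & phi f = E s s].
Proof.
have [f [hf fE]] := phi_surj (inIE (lexx s)).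
pose fD a b := if a == b then f a b else 0.
pose fO a b := f a b - fD a b.
have hD : inI fD by move=> a b ab; rewrite /fD hf // if_same.
have hO : inI fO by move=> a b ab; rewrite /fO hD // hf // subr0.
have fdec : f = (fun a b => 1 * fO a b + fD a b).
  by apply: functional_extensionality => x; apply: functional_extensionality => y; rewrite mul1r /fO subrK.
have pD : forall a b, a != b -> phi fD a b = 0.
  move=> a b ab; rewrite (phi_expand hD) big1_seq // => p /andP[_ pr].
  rewrite /fD; case: eqP => [e|]; last by rewrite mul0r.
  by rewrite -e S1 // mulr0.
have pO : forall a, phi fO a a = 0.
  move=> a; rewrite (phi_expand hO) big1_seq // => p /andP[_ pr].
  rewrite /fO /fD; case: eqP => [e|ne]; first by rewrite subrr mul0r.
  rewrite S2 ?mulr0 // lt_neqAle Rr_le // andbT; exact/eqP.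
have phO : phi fO = phi Z.
  rewrite phi0; apply: functional_extensionality => a; apply: functional_extensionality => b.
  case: (eqVneq a b) => [->|ab]; first exact: pO.
  have := congr1 (fun h => h a b) fE; rewrite fdec phiL // pD // addr0 mul1r => ->.
  by rewrite /eI; case: andP => // [[/eqP e1 /eqP e2]]; rewrite e1 e2 eqxx in ab.
have fO0 := phi_inj hO inI0 phO.
exists f; split => // a b ab.
have := congr1 (fun h => h a b) fO0; rewrite /fO /fD (negbTE ab) subr0 => ->.
by [].
Qed.


Lemma mul_diag_l f e (a b : T) : Ddiag f -> inI e -> mulI f e a b = f a a * e a b.
Proof.
move=> hf he; rewrite /mulI.
case: (boolP (a <= b)%O) => ab.
  rewrite (bigD1 a) /= ?lexx ?ab // big1 ?addr0 // => t /andP[_ ta].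
  by rewrite hf ?mul0r // eq_sym.
rewrite he // mulr0 big1 // => t /andP[ht tb].
case: (eqVneq t a) => [e1|ta]; first by rewrite -e1 tb in ab.
by rewrite hf ?mul0r // eq_sym.
Qed.

Lemma mul_diag_r f e (a b : T) : Ddiag f -> inI e -> mulI e f a b = e a b * f b b.
Proof.
move=> hf he; rewrite /mulI.
case: (boolP (a <= b)%O) => ab.
  rewrite (bigD1 b) /= ?lexx ?ab // big1 ?addr0 // => t /andP[_ tb].
  by rewrite hf ?mulr0.
rewrite he // mul0r big1 // => t /andP[ht tb].
case: (eqVneq t b) => [e1|ta]; first by rewrite -e1 ht in ab.
by rewrite hf ?mulr0.
Qed.

Lemma lie_diag f e (a b : T) : Ddiag f -> inI e -> lieI f e a b = (f a a - f b b) * e a b.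
Proof.
by move=> hf he; rewrite /lieI mul_diag_l // mul_diag_r // mulrBl [e a b * _]mulrC.
Qed.

Lemma inI_lie f g : inI f -> inI g -> inI (lieI f g).
Proof.
move=> hf hg a b ab; rewrite /lieI /mulI !big1 ?subrr // => t /andP[h1 h2];
by have := le_trans h1 h2; rewrite (negbTE ab).
Qed.

Lemma mul_eI (a b c e : T) : (a <= b)%O -> (c <= e)%O ->
  mulI (E a b) (E c e) = (fun u v => if b == c then E a e u v else 0).
Proof.
move=> ab ce; apply: functional_extensionality => u; apply: functional_extensionality => v.
rewrite /mulI.
have term : forall t, E a b u t * E c e t v = if t == b then (if b == c then E a e u v else 0) else 0.
  move=> t; rewrite /eI; case: (eqVneq t b) => [->|tb]; last by rewrite andbF mul0r.
  by case: (u == a); case: (b == c); case: (v == e); rewrite /= ?mulr1 ?mulr0 ?mul0r.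
under eq_bigr do rewrite term.
case: (boolP ((u <= b)%O && (b <= v)%O)) => Pb.
  by rewrite (bigD1 b) //= eqxx big1 ?addr0 // => t /andP[_ /negbTE ->].
rewrite big1; last by move=> t Pt; case: eqP => // e1; rewrite -e1 Pt in Pb.
case: (eqVneq b c) => // bc; subst c.
case: (eqVneq (E a e u v) 0) => // /eI_neq0[e1 e2].
by rewrite e1 e2 ab ce in Pb.
Qed.

Lemma lie_eI (a b c e : T) : (a <= b)%O -> (c <= e)%O ->
  lieI (E a b) (E c e) = (fun u v => (if b == c then E a e u v else 0) - (if e == a then E c b u v else 0)).
Proof.
move=> ab ce; apply: functional_extensionality => u; apply: functional_extensionality => v.
by rewrite /lieI mul_eI // mul_eI.
Qed.

Lemma lie_scale (k1 k2 : K) f g :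
  lieI (fun u v => k1 * f u v) (fun u v => k2 * g u v) = (fun u v => k1 * k2 * lieI f g u v).
Proof.
apply: functional_extensionality => u; apply: functional_extensionality => v.
rewrite /lieI /mulI mulrBr !mulr_sumr; congr (_ - _); apply: eq_bigr => t _;
by rewrite mulrACA // [k2 * k1]mulrC mulrACA.
Qed.

Lemma case_lie (a b c e x y : T) (k k' : K) : (a < b)%O -> (c < e)%O -> k != 0 ->
  k = k' * ((if b == c then E a e x y else 0) - (if e == a then E c b x y else 0)) ->
  (b = c /\ (x, y) = (a, e)) \/ (e = a /\ (x, y) = (c, b)).
Proof.
move=> ab ce k0 hk.
case: (eqVneq b c) => [bc|bc].
  subst c; have ea : (e == a) = false.
    by apply/negbTE; apply/eqP => h; have := lt_trans ab ce; rewrite h ltxx.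
  rewrite ea eqxx subr0 in hk; left; split => //.
  have : E a e x y != 0 by apply/eqP => h; rewrite h mulr0 in hk; rewrite hk eqxx in k0.
  by case/eI_neq0 => -> ->.
rewrite (negbTE bc) in hk.
case: (eqVneq e a) => [ea|ea]; last by rewrite (negbTE ea) subrr mulr0 in hk; rewrite hk eqxx in k0.
subst e; rewrite eqxx in hk; right; split => //.
have : E c b x y != 0.
  by apply/eqP => h; rewrite h sub0r oppr0 mulr0 in hk; rewrite hk eqxx in k0.
by case/eI_neq0 => -> ->.
Qed.

Lemma H1 (x y : T) : (x < y)%O -> exists a b (k : K),
  [/\ (a < b)%O, k != 0, theta phi x y = Some (a, b) & phi (E x y) = (fun u v => k * E a b u v)].
Proof.
move=> xy; have xy' := ltW xy.
set g := phi (E x y).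
have hg : inI g by apply: phiI; apply: inIE.
have eq1 : forall s, exists c : K, forall u v, (E s s u u - E s s v v) * g u v = c * g u v.
  move=> s; have [f [hf df fE]] := diag_pre s.
  exists (f x x - f y y) => u v.
  have L1 : lieI f (E x y) = (fun u v => (f x x - f y y) * E x y u v).
    apply: functional_extensionality => u'; apply: functional_extensionality => v'.
    rewrite lie_diag //; last exact: inIE.
    case: (eqVneq (E x y u' v') 0) => [->|/eI_neq0[-> ->]]; by rewrite ?mulr0.
  have := congr1 (fun h => h u v) (phi_lie hf (inIE xy')).
  rewrite L1 phiZ; last exact: inIE.
  rewrite fE lie_diag //.
    by move=> a b ab; rewrite /eI; case: andP => // [[/eqP e1 /eqP e2]]; rewrite e1 e2 eqxx in ab.
have [ab0|nz] := boolP [forall p : T * T, g p.1 p.2 == 0].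
  exfalso.
  have g0 : g = phi Z.
    rewrite phi0; apply: functional_extensionality => u; apply: functional_extensionality => v.
    by move/forallP: ab0 => /(_ (u, v)) /eqP.
  have := congr1 (fun h => h x y) (phi_inj (inIE xy') inI0 g0).
  by rewrite /eI !eqxx /=; move/eqP; rewrite oner_eq0.
move/forallPn: nz => [[a b] /= gab].
have ab : (a < b)%O.
  rewrite lt_neqAle; apply/andP; split; last first.
    by apply: contraNT gab => h; rewrite hg.
  by apply/eqP => e; move: gab; rewrite e /g S2 ?eqxx.
have [ca hca] := eq1 a.
have [cb hcb] := eq1 b.
have nab : a != b by rewrite lt_eqF.
have ca1 : ca = 1.
  have := hca a b; rewrite /eI !eqxx /= eq_sym (negbTE nab) /= subr0 mul1r => h.
  by apply: (mulIf gab); rewrite -h mul1r.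
have cbm : cb = -1.
  have := hcb a b; rewrite /eI !eqxx /= (negbTE nab) /= sub0r => h.
  by apply: (mulIf gab); rewrite -h mulN1r.
have supp : forall u v, g u v != 0 -> u = a /\ v = b.
  move=> u v guv.
  have e1 := hca u v; have e2 := hcb u v.
  rewrite ca1 mul1r in e1; rewrite cbm mulN1r in e2.
  have e1' := mulIf guv (etrans e1 (esym (mul1r _))).
  have e2' := mulIf guv (etrans e2 (esym (mulN1r _))).
  move: e1' e2'; rewrite /eI !andbb.
  case: (eqVneq u a) => [ua|ua]; case: (eqVneq v a) => [va|va]; 
  case: (eqVneq u b) => [ub|ub]; case: (eqVneq v b) => [vb|vb] //=;
  rewrite ?subrr ?subr0 ?sub0r;
  try (by move=> h; have := oner_neq0 K; rewrite -h eqxx);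
  try (by move=> _ h; have := oner_neq0 K; rewrite -oppr_eq0 -h eqxx);
  try (by move=> h; have := oner_neq0 K; rewrite h oppr_eq0 eqxx);
  try (by subst; rewrite eqxx in nab).
  - move=> _ _; exfalso; subst u v.
    by move: guv; rewrite hg ?eqxx // lt_geF.
have gE : g = (fun u v => g a b * E a b u v).
  apply: functional_extensionality => u; apply: functional_extensionality => v.
  case: (eqVneq (g u v) 0) => [g0|/supp[-> ->]]; last by rewrite /eI !eqxx mulr1.
  rewrite g0 /eI; case: andP => [[/eqP e1 /eqP e2]|_]; last by rewrite mulr0.
  by rewrite -e1 -e2 g0 eqxx in gab.
exists a, b, (g a b); split => //.
rewrite /theta; case: pickP => [[p1 p2] /and3P[/= h1 h2 h3]|H].
  by have := supp _ _ h2; case=> -> ->.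
have := H (a, b); rewrite /= ab gab /= => /negbT/negP; case.
apply/forallP => q; apply/implyP => qab; apply/negPn/negP => gq.
by case: q qab gq => q1 q2 /= qab /supp [e1 e2]; rewrite e1 e2 eqxx in qab.
Qed.

Lemma tri_fwd (x y z a b c e p q : T) : (x < y)%O -> (y < z)%O ->
  theta phi x y = Some (a, b) -> theta phi y z = Some (c, e) -> theta phi x z = Some (p, q) ->
  (b = c /\ (p, q) = (a, e)) \/ (e = a /\ (p, q) = (c, b)).
Proof.
move=> xy yz t1 t2 t3.
have xz := lt_trans xy yz.
have [a1 [b1 [k1 [ab1 k10 th1 ph1]]]] := H1 xy.
have [a2 [b2 [k2 [ab2 k20 th2 ph2]]]] := H1 yz.
have [a3 [b3 [k3 [ab3 k30 th3 ph3]]]] := H1 xz.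
move: t1 t2 t3; rewrite th1 th2 th3 => -[? ?] [? ?] [? ?]; subst a1 b1 a2 b2 a3 b3.
have LE : lieI (E x y) (E y z) = E x z.
  rewrite lie_eI ?(ltW xy) ?(ltW yz) //.
  apply: functional_extensionality => u; apply: functional_extensionality => v.
  by rewrite eqxx (gt_eqF xz) subr0.
have := congr1 (fun h => h p q) (phi_lie (inIE (ltW xy)) (inIE (ltW yz))).
rewrite LE ph1 ph2 ph3 lie_scale lie_eI ?(ltW ab1) ?(ltW ab2) // {1}/eI !eqxx mulr1.
exact: case_lie.
Qed.

Lemma tri_inv (p q r : T * T) (a b c : T) :
  (p.1 < p.2)%O -> (q.1 < q.2)%O -> (r.1 < r.2)%O ->
  theta phi p.1 p.2 = Some (a, b) -> theta phi q.1 q.2 = Some (b, c) ->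
  theta phi r.1 r.2 = Some (a, c) ->
  (p.2 = q.1 /\ r = (p.1, q.2)) \/ (q.2 = p.1 /\ r = (q.1, p.2)).
Proof.
move=> hp hq hr t1 t2 t3.
have [a1 [b1 [k1 [ab1 k10 th1 ph1]]]] := H1 hp.
have [a2 [b2 [k2 [ab2 k20 th2 ph2]]]] := H1 hq.
have [a3 [b3 [k3 [ab3 k30 th3 ph3]]]] := H1 hr.
move: t1 t2 t3; rewrite th1 th2 th3 => -[? ?] [? ?] [? ?]; subst a1 b1 a2 b2 a3 b3.
have ac := lt_trans ab1 ab2.
have ip := inIE (ltW hp); have iq := inIE (ltW hq); have ir := inIE (ltW hr).
have k12 : k1 * k2 != 0 by rewrite mulf_neq0.
have L : phi (lieI (E p.1 p.2) (E q.1 q.2)) = (fun u v => k1 * k2 * E a c u v).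
  rewrite phi_lie // ph1 ph2 lie_scale lie_eI ?(ltW ab1) ?(ltW ab2) //.
  apply: functional_extensionality => u; apply: functional_extensionality => v.
  by rewrite eqxx (gt_eqF ac) subr0.
have ER : phi (E r.1 r.2) = phi (fun u v => (k3 / (k1 * k2)) * lieI (E p.1 p.2) (E q.1 q.2) u v).
  rewrite [RHS]phiZ; last exact: inI_lie.
  apply: functional_extensionality => u; apply: functional_extensionality => v.
  have := congr1 (fun h => h u v) L => /= ->.
  by rewrite ph3 mulrA divfK.
have := congr1 (fun h => h r.1 r.2) (phi_inj ir (inIZ _ (inI_lie ip iq)) ER).
rewrite lie_eI ?(ltW hp) ?(ltW hq) // {1}/eI !eqxx => h.
have := case_lie hp hq (oner_neq0 K) h.
by rewrite -surjective_pairing.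
Qed.

Lemma th_inj (p q t : T * T) : (p.1 < p.2)%O -> (q.1 < q.2)%O ->
  theta phi p.1 p.2 = Some t -> theta phi q.1 q.2 = Some t -> p = q.
Proof.
move=> hp hq t1 t2.
have [a1 [b1 [k1 [ab1 k10 th1 ph1]]]] := H1 hp.
have [a2 [b2 [k2 [ab2 k20 th2 ph2]]]] := H1 hq.
move: t1 t2; rewrite th1 th2 => -[<-] [e1 e2]; subst a2 b2.
have ip := inIE (ltW hp); have iq := inIE (ltW hq).
have EQ : phi (fun u v => k2 * E p.1 p.2 u v) = phi (fun u v => k1 * E q.1 q.2 u v).
  rewrite !phiZ // ph1 ph2.
  apply: functional_extensionality => u; apply: functional_extensionality => v.
  by rewrite !mulrA [k1 * k2]mulrC.
have := congr1 (fun h => h p.1 p.2) (phi_inj (inIZ _ ip) (inIZ _ iq) EQ).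
rewrite {1}/eI !eqxx mulr1 => h.
have : E q.1 q.2 p.1 p.2 != 0 by apply/eqP => h0; rewrite h0 mulr0 in h; rewrite h eqxx in k20.
by case/eI_neq0 => e1 e2; rewrite [p]surjective_pairing [q]surjective_pairing e1 e2.
Qed.

Definition Gm (p : T * T) : T * T :=
  if (p.1 < p.2)%O then odflt p (theta phi p.1 p.2) else p.

Lemma Gm_in p : (p.1 < p.2)%O -> ((Gm p).1 < (Gm p).2)%O /\ theta phi p.1 p.2 = Some (Gm p).
Proof.
move=> hp; have [a1 [b1 [k1 [ab1 k10 th1 ph1]]]] := H1 hp.
by rewrite /Gm hp th1.
Qed.

Lemma Gm_inj : injective Gm.
Proof.
move=> p q.
case: (boolP (p.1 < p.2)%O) => hp; case: (boolP (q.1 < q.2)%O) => hq.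
- have [g1 t1] := Gm_in hp; have [g2 t2] := Gm_in hq => e.
  by apply: (th_inj hp hq t1); rewrite t2 e.
- have [g1 _] := Gm_in hp; rewrite {2}/Gm (negbTE hq) => e.
  by rewrite e (negbTE hq) in g1.
- have [g2 _] := Gm_in hq; rewrite {1}/Gm (negbTE hp) => e.
  by rewrite -e (negbTE hp) in g2.
- by rewrite /Gm (negbTE hp) (negbTE hq).
Qed.

Lemma th_onto (a b : T) : (a < b)%O -> exists p : T * T, (p.1 < p.2)%O /\ theta phi p.1 p.2 = Some (a, b).
Proof.
move=> ab; set p := invF Gm_inj (a, b).
have Gp : Gm p = (a, b) by rewrite /p f_invF.
case: (boolP (p.1 < p.2)%O) => hp.
  by exists p; split => //; have [_ ->] := Gm_in hp; rewrite Gp.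
by move: Gp; rewrite /Gm (negbTE hp) => e; rewrite e /= ab in hp.
Qed.

Definition thinv (a b : T) : T * T :=
  odflt (a, b) [pick p : T * T | (p.1 < p.2)%O && (theta phi p.1 p.2 == Some (a, b))].

Lemma thinvP (a b : T) : (a < b)%O ->
  ((thinv a b).1 < (thinv a b).2)%O /\ theta phi (thinv a b).1 (thinv a b).2 = Some (a, b).
Proof.
move=> ab; rewrite /thinv; case: pickP => [p /andP[h1 /eqP h2]|H] //=.
have [p [h1 h2]] := th_onto ab.
by have := H p; rewrite h1 h2 eqxx.
Qed.

Lemma thinv_th (p : T * T) (a b : T) : (p.1 < p.2)%O -> theta phi p.1 p.2 = Some (a, b) ->
  thinv a b = p.
Proof.
move=> hp th.
have [a1 [b1 [k1 [ab1 k10 th1 ph1]]]] := H1 hp.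
move: th; rewrite th1 => -[e1 e2]; subst a1 b1.
have [h1 h2] := thinvP ab1.
exact: (th_inj h1 hp h2 th1).
Qed.

End Alg.

End Helpers.
Import Helpers.


Lemma chain_comp {d : Order.disp_t} {T : finPOrderType d} (x0 : T) {s : seq T} {p q : T} :
  sorted <%O s -> p \in s -> q \in s -> p >=< q.
Proof.
move=> ss ps qs; rewrite -(nth_index x0 ps) -(nth_index x0 qs).
have hi := index_mem p s; have hj := index_mem q s; rewrite ps in hi; rewrite qs in hj.
have mono := lt_sorted_ltn_nth x0 ss.
case: (ltngtP (index p s) (index q s)) => [ij|ji|->]; last exact: comparablexx.
  by have := mono _ _ hi hj; rewrite ij => h; rewrite /Order.comparable (ltW h).
by have := mono _ _ hj hi; rewrite ji => h; rewrite /Order.comparable (ltW h) orbT.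
Qed.

Theorem lemma5p4 (d : Order.disp_t) (T : finPOrderType d) (K : fieldType)
  (phi : (T -> T -> K) -> (T -> T -> K)) :
  connectedP T -> elementary phi ->
  forall (x0 : T) (u : seq T), max_chain u ->
  exists v : seq T, [/\ max_chain v, size v = size u &
    ((forall i j, (i < j < size u)%N ->
        theta phi (nth x0 u i) (nth x0 u j) = Some (nth x0 v i, nth x0 v j))
     \/
     (forall i j, (i < j < size u)%N ->
        theta phi (nth x0 u i) (nth x0 u j)
        = Some (nth x0 v (size u - 1 - j), nth x0 v (size u - 1 - i))))].
Proof.
move=> _ [Hlie [psi [_ Hc]]] x0 u [su mu].
have S1 : forall (x a b : T), a != b -> phi (eI K x x) a b = 0%R.
  move=> x a b ab; rewrite Hc // /compL lng_refl.
  case: (boolP (a <= b)) => //= hab.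
  have : a < b by rewrite lt_neqAle ab.
  by move/lng_lt; case: (lng a b).
have S2 : forall (x y a : T), x < y -> phi (eI K x y) a a = 0%R.
  move=> x y a xy; rewrite Hc ?(ltW xy) // /compL lng_refl.
  by have := lng_lt xy; case: (lng x y) => //= n _; rewrite andbF.
have H1' := H1 Hlie S1 S2.
set m := size u. have mE : size u = m by []. clearbody m.
case: (leqP m 1) => hm.
  exists u; split => //; left => i j /andP[ij jm]; exfalso; lia.
have ltu : forall i j, (i < j)%N -> (j < m)%N -> nth x0 u i < nth x0 u j.
  move=> i j ij jm; rewrite (lt_sorted_ltn_nth x0 su) // inE mE; lia.
pose f i j := odflt (x0, x0) (theta phi (nth x0 u i) (nth x0 u j)).
have fth : forall i j, (i < j)%N -> (j < m)%N ->
    (f i j).1 < (f i j).2 /\ theta phi (nth x0 u i) (nth x0 u j) = Some (f i j).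
  move=> i j ij jm; have [a [b [k [ab _ th _]]]] := H1' _ _ (ltu i j ij jm).
  by rewrite /f th.
have Hflt : flt m f by move=> i j ij jm; case: (fth i j ij jm).
have Hftri : ftri m f.
  move=> i j k ij jk km.
  have [_ t1] := fth i j ij (ltn_trans jk km).
  have [_ t2] := fth j k jk km.
  have [_ t3] := fth i k (ltn_trans ij jk) km.
  rewrite [f i j]surjective_pairing in t1; rewrite [f j k]surjective_pairing in t2;
  rewrite [f i k]surjective_pairing in t3.
  have := tri_fwd Hlie S1 S2 (ltu i j ij (ltn_trans jk km)) (ltu j k jk km) t1 t2 t3.
  by rewrite -!surjective_pairing.
have [w [sw srt Hor]] := comb x0 Hflt Hftri.
exists w; split; last first.
- case: Hor => H; [left|right] => i j /andP[ij jm]; have [_ t] := fth i j ij jm;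
  by rewrite t H.
- by rewrite sw.
split => // z zw.
case: (boolP (all (fun y => z >=< y) w)) => [allc|]; last by move/allPn => [y yw nc]; exists y.
exfalso.
set vs := sort <=%O (z :: w).
have tot : {in (z :: w) &, total (<=%O : rel T)}.
  move=> p q; rewrite !inE => /orP[/eqP->|pw] /orP[/eqP->|qw].
  - by rewrite lexx.
  - exact: (allP allc q qw).
  - by have := allP allc p pw; rewrite comparable_sym.
  - by have := chain_comp x0 srt pw qw.
have sle : sorted <=%O vs by apply: (sort_sorted_in tot); apply/allP.
have pvs : perm_eq vs (z :: w) by rewrite perm_sort.
have uw : uniq w by move: srt; rewrite lt_sorted_uniq_le => /andP[].
have uvs : uniq vs by rewrite (perm_uniq pvs) /= zw.
have svs : sorted <%O vs by rewrite lt_sorted_uniq_le uvs.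
have szv : size vs = m.+1 by rewrite (perm_size pvs) /= sw.
have memv : forall y, (y \in vs) = (y \in z :: w) by move=> y; rewrite (perm_mem pvs).
have ltv : forall i j, (i < j)%N -> (j < m.+1)%N -> nth x0 vs i < nth x0 vs j.
  move=> i j ij jm; rewrite (lt_sorted_ltn_nth x0 svs) // inE; lia.
pose g i j := thinv phi (nth x0 vs i) (nth x0 vs j).
have gth : forall i j, (i < j)%N -> (j < m.+1)%N ->
    (g i j).1 < (g i j).2 /\ theta phi (g i j).1 (g i j).2 = Some (nth x0 vs i, nth x0 vs j).
  by move=> i j ij jm; apply: (thinvP Hlie S1 S2); apply: ltv.
have Hglt : flt m.+1 g by move=> i j ij jm; case: (gth i j ij jm).
have Hgtri : ftri m.+1 g.
  move=> i j k ij jk km.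
  have [l1 t1] := gth i j ij (ltn_trans jk km).
  have [l2 t2] := gth j k jk km.
  have [l3 t3] := gth i k (ltn_trans ij jk) km.
  exact: (tri_inv Hlie S1 S2 l1 l2 l3 t1 t2 t3).
have [w2 [sw2 srt2 Hor2]] := comb x0 Hglt Hgtri.
have inw2 : forall p q, p \in vs -> q \in vs -> p < q ->
    (thinv phi p q).1 \in w2 /\ (thinv phi p q).2 \in w2.
  move=> p q pv qv pq.
  have hi := index_mem p vs; have hj := index_mem q vs; rewrite pv in hi; rewrite qv in hj.
  rewrite szv in hi hj.
  move: pq; rewrite -(nth_index x0 pv) -(nth_index x0 qv).
  rewrite (lt_sorted_ltn_nth x0 svs) ?inE ?szv // => ij.
  case: Hor2 => H; have := H _ _ ij hj; rewrite /g => E; rewrite E /=; split; apply: mem_nth;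
    by rewrite sw2 // subSS subn0 ltnS leq_subr.
have u_in2 : forall i j, (i < j)%N -> (j < m)%N -> nth x0 u i \in w2 /\ nth x0 u j \in w2.
  move=> i j ij jm.
  have [lt t] := fth i j ij jm.
  have fw : (f i j).1 \in w /\ (f i j).2 \in w.
    have im : (i < m)%N by apply: ltn_trans ij jm.
    case: Hor => H; have := H _ _ ij jm => E; rewrite E /=; split; apply: mem_nth; rewrite sw //;
    clear -hm jm; lia.
  have fv : (f i j).1 \in vs /\ (f i j).2 \in vs.
    by rewrite !memv !inE; case: fw => -> ->; rewrite !orbT.
  have := inw2 _ _ fv.1 fv.2 lt.
  rewrite [f i j]surjective_pairing in t.
  by rewrite (thinv_th Hlie S1 S2 (p := (nth x0 u i, nth x0 u j)) (ltu i j ij jm) t).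
have uin : forall k, (k < m)%N -> nth x0 u k \in w2.
  move=> k km; case: k km => [|k] km.
    by case: (u_in2 0%N 1%N (ltnSn 0) hm).
  by case: (u_in2 0%N k.+1 (ltn0Sn k) km).
case: (boolP (all (mem u) w2)) => [sub|].
  have uw2 : uniq w2 by move: srt2; rewrite lt_sorted_uniq_le => /andP[].
  by have := uniq_leq_size uw2 (allP sub); rewrite sw2 mE ltnn.
move/allPn => [y yw2 yu].
have [u' u'u nc] := mu y yu.
have : u' \in w2.
  rewrite -(nth_index x0 u'u); apply: uin; by rewrite -mE index_mem.
move=> u'w2; by rewrite (chain_comp x0 srt2 yw2 u'w2) in nc.
Qed.
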